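(* In the random coefficients perturbed utility model described in the context, let the average structural function factor as in the context (so that $\overline{Y}(x,\beta)$ is defined) and let Assumption 2 hold. Assume $\beta_{k,1}=1$ almost surely (under $\nu$) for each $k\in\{1,\dots,K\}$. For each $k$ let $-\infty\le\underline{x}_{k,1}\le\overline{x}_{k,1}\le\infty$, and suppose $\overline{Y}(x)$ is identified (known) for all $x=(x_1',\dots,x_K')'$ satisfying $x_{k,1}\in[\underline{x}_{k,1},\overline{x}_{k,1}]$ for each $k$ and $x_{k,j}=0$ for all $j>1$. Then differences $V(u)-V(u')$ are identified for all $u,u'\in\times_{k=1}^K[\underline{x}_{k,1},\overline{x}_{k,1}]$. In particular, if $\underline{x}_{k,1}=-\infty$ and $\overline{x}_{k,1}=\infty$ for each $k$, then $V$ is identified up to an additive constant.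
   Context: Model. There are $K$ goods. For each good $k\in\{1,\dots,K\}$ there is a covariate vector $x_k=(x_{k,1},\dots,x_{k,d_k})'\in\mathbb{R}^{d_k}$ and a random coefficient vector $\beta_k=(\beta_{k,1},\dots,\beta_{k,d_k})'\in\mathbb{R}^{d_k}$; write $x=(x_1',\dots,x_K')'$ and $\beta=(\beta_1',\dots,\beta_K')'$. Let $\varepsilon$ be an unobservable of unrestricted dimension in a measurable space $E$, $B\subseteq\mathbb{R}^K$ a feasibility set and $D:B\times E\to\mathbb{R}\cup\{-\infty\}$ a disturbance. Choices satisfy $Y(x,\beta,\varepsilon)\in\arg\max_{y\in B}\sum_{k=1}^K y_k(\beta_k'x_k)+D(y,\varepsilon)$ (argmax nonempty). The average structural function is $\overline{Y}(x)=\int Y(x,\beta,\varepsilon)\,d\tau(\beta,\varepsilon)$, where $\tau=\nu\otimes\mu$ is a product of a probability measure $\nu$ over $\beta$ and a probability measure $\mu$ over $\varepsilon$ (slope–intercept independence), not depending on $x$, and $\overline{Y}(x)$ is finite. Define $\overline{Y}(x,\beta)=\int Y(x,\beta,\varepsilon)\,d\mu(\varepsilon)$, so $\overline{Y}(x)=\int\overline{Y}(x,\beta)\,d\nu(\beta)$. Let $\overline{B}$ be the convex hull of $B$ and $\overline{D}(y)=\sup\{\int D(\tilde Y(\varepsilon),\varepsilon)\,d\mu(\varepsilon):\tilde Y:E\to B\text{ measurable},\ \int\tilde Y\,d\mu=y\}$ ($\sup\emptyset=-\infty$). Assumption 2: (i) $\overline{Y}(x,\beta)$ equals (is the unique element of)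 $\arg\max_{y\in\overline{B}}\sum_k y_k(\beta_k'x_k)+\overline{D}(y)$; (ii) $\overline{B}$ is nonempty, closed, convex; (iii) $\overline{D}:\mathbb{R}^K\to\mathbb{R}\cup\{-\infty\}$ is concave, upper semicontinuous, finite at some $y\in\overline{B}$. Define the integrated indirect utility $V(u)=\max_{y\in\overline{B}}\sum_k y_ku_k+\overline{D}(y)$ for $u\in\mathbb{R}^K$. Identification: a quantity is identified if it is uniquely determined by the known values of $\overline{Y}$ on the stated region, i.e. all specifications satisfying the hypotheses and generating the same $\overline{Y}$ there yield the same value. *)

(* Defs.v *)
From HB Require Import structures.
From mathcomp Require Import all_boot all_order all_algebra.
From mathcomp Require Import all_classical all_reals all_analysis.
Set Implicit Arguments. Unset Strict Implicit. Unset Printing Implicit Defensive.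
Import Order.TTheory GRing.Theory Num.Theory.
Local Open Scope classical_set_scope.
Local Open Scope ring_scope.

(* Good k has (d k).+1 covariates / coefficients; coordinate "1" of the paper
   is the index ord0.  A covariate (or coefficient) configuration is a family
   indexed by goods. *)
Definition coef (R : realType) (K : nat) (d : 'I_K -> nat) :=
  forall k : 'I_K, 'I_(d k).+1 -> R.

Definition index_k (R : realType) K (d : 'I_K -> nat) (b x : coef R d) (k : 'I_K) : R :=
  \sum_(j < (d k).+1) b k j * x k j.

Definition dotv (R : realType) K (y u : 'rV[R]_K) : R := \sum_(k < K) y ord0 k * u ord0 k.

Definition argmax_on (T : Type) (R : realType) (A : set T) (f : T -> \bar R) : set T :=
  [set y | A y /\ forall z, A z -> (f z <= f y)%E].

Definition conv_hull (R : realType) K (B : set 'rV[R]_K) : set 'rV[R]_K :=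
  [set y | exists n (w : 'I_n -> R) (p : 'I_n -> 'rV[R]_K),
     (forall i, 0 <= w i) /\ \sum_(i < n) w i = 1 /\ (forall i, B (p i)) /\
     y = \sum_(i < n) w i *: p i].

Unset Implicit Arguments.
Record spec (R : realType) (K : nat) (d : 'I_K -> nat) := Spec {
  sp_dE : measure_display;
  sp_E : measurableType sp_dE;              (* space of epsilon *)
  sp_mu : probability sp_E R;
  sp_dT : measure_display;
  sp_T : measurableType sp_dT;
  sp_nu : probability sp_T R;
  sp_beta : sp_T -> coef R d;               (* beta; nu = law of sp_beta *)
  sp_B : set 'rV[R]_K;
  sp_D : 'rV[R]_K -> sp_E -> \bar R;
  sp_Y : coef R d -> coef R d -> sp_E -> 'rV[R]_K  (* Y(x, beta, eps) *)
}.
Set Implicit Arguments.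
Arguments sp_dE {R K d}. Arguments sp_E {R K d}. Arguments sp_mu {R K d}.
Arguments sp_dT {R K d}. Arguments sp_T {R K d}. Arguments sp_nu {R K d}.
Arguments sp_beta {R K d}. Arguments sp_B {R K d}. Arguments sp_D {R K d}.
Arguments sp_Y {R K d}.

Section SpecDefs.
Variables (R : realType) (K : nat) (d : 'I_K -> nat) (S : @spec R K d).

Definition Bbar : set 'rV[R]_K := conv_hull (sp_B S).

Definition utility (x b : coef R d) (e : sp_E S) (y : 'rV[R]_K) : \bar R :=
  ((\sum_(k < K) y ord0 k * index_k b x k)%:E + sp_D S y e)%E.

Definition Ybar_xb (x b : coef R d) : 'rV[R]_K :=
  \row_(k < K) fine (\int[sp_mu S]_e ((sp_Y S x b e) ord0 k)%:E)%E.

Definition ASF (x : coef R d) : 'rV[R]_K :=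
  \row_(k < K) fine (\int[sp_nu S]_t ((Ybar_xb x (sp_beta S t)) ord0 k)%:E)%E.

Definition Dbar (y : 'rV[R]_K) : \bar R :=
  ereal_sup [set (\int[sp_mu S]_e sp_D S (Yt e) e)%E | Yt in
    [set Yt : sp_E S -> 'rV[R]_K |
       (forall e, sp_B S (Yt e)) /\
       (forall k, measurable_fun setT (fun e => Yt e ord0 k)) /\
       (forall k, (sp_mu S).-integrable setT (fun e => (Yt e ord0 k)%:E)) /\
       (forall k, (\int[sp_mu S]_e (Yt e ord0 k)%:E)%E = (y ord0 k)%:E)]].

Definition Vfun (u : 'rV[R]_K) : \bar R :=
  ereal_sup [set ((dotv y u)%:E + Dbar y)%E | y in Bbar].

Definition near_vec (y : 'rV[R]_K) (P : 'rV[R]_K -> Prop) :=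
  exists2 eps : R, 0 < eps & forall z : 'rV[R]_K, (forall k, `|z ord0 k - y ord0 k| < eps) -> P z.

Definition admissible : Prop :=
  (forall (y : 'rV[R]_K) e, sp_D S y e != +oo%E) /\
  (forall x b e, argmax_on (sp_B S) (utility x b e) (sp_Y S x b e)) /\
  (forall x b k, (sp_mu S).-integrable setT (fun e => ((sp_Y S x b e) ord0 k)%:E)) /\
  (forall x k, (sp_nu S).-integrable setT
                 (fun t => ((Ybar_xb x (sp_beta S t)) ord0 k)%:E)) /\
  (forall x b, argmax_on Bbar (fun y : 'rV[R]_K => ((\sum_(k < K) y ord0 k * index_k b x k)%:E
                                          + Dbar y)%E)
               = [set Ybar_xb x b]) /\
  (* Assumption 2 (ii): Bbar nonempty, closed, convex *)
  Bbar !=set0 /\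
  (forall y : 'rV[R]_K, (forall eps : R, 0 < eps -> exists z : 'rV[R]_K, Bbar z /\
                 forall k, `|z ord0 k - y ord0 k| < eps) -> Bbar y) /\
  (forall (y z : 'rV[R]_K) (t : R), Bbar y -> Bbar z -> 0 <= t <= 1 ->
                 Bbar (t *: y + (1 - t) *: z)) /\
  (* Assumption 2 (iii): Dbar concave, usc, finite somewhere on Bbar, never +oo *)
  (forall y : 'rV[R]_K, Dbar y != +oo%E) /\
  (forall (y z : 'rV[R]_K) (t : R), 0 <= t <= 1 ->
      (t%:E * Dbar y + (1 - t)%:E * Dbar z <= Dbar (t *: y + (1 - t) *: z))%E) /\
  (forall (y : 'rV[R]_K) (r : R), (Dbar y < r%:E)%E -> near_vec y (fun z => (Dbar z < r%:E)%E)) /\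
  (exists y : 'rV[R]_K, Bbar y /\ Dbar y \is a fin_num) /\
  {ae sp_nu S, forall t, forall k, sp_beta S t k ord0 = 1}.

End SpecDefs.

Definition in_region (R : realType) K (d : 'I_K -> nat) (lo hi : 'I_K -> \bar R)
    (x : coef R d) : Prop :=
  forall k, (lo k <= (x k ord0)%:E <= hi k)%E /\ (forall j, j != ord0 -> x k j = 0).

Definition in_box (R : realType) K (lo hi : 'I_K -> \bar R) (u : 'rV[R]_K) : Prop :=
  forall k, (lo k <= (u ord0 k)%:E <= hi k)%E.

(* Main.v *)
Require Import Defs.
From HB Require Import structures.
From mathcomp Require Import all_boot all_order all_algebra.
From mathcomp Require Import all_classical all_reals all_analysis.
From mathcomp Require Import lra.
Import Order.TTheory GRing.Theory Num.Theory.
Local Open Scope classical_set_scope.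
Local Open Scope ring_scope.

Section Aux.
Variables (R : realType) (K : nat) (d : 'I_K -> nat).

Definition xu (u : 'rV[R]_K) : coef R d := fun k j => if j == ord0 then u ord0 k else 0.
Definition b1 : coef R d := fun _ _ => 1.

Lemma index_xu (b : coef R d) u k : b k ord0 = 1 -> index_k b (xu u) k = u ord0 k.
Proof.
rewrite /index_k big_ord_recl /xu eqxx => ->; rewrite mul1r big1 ?addr0 // => i _.
by rewrite eq_sym (negbTE (neq_lift _ _)) mulr0.
Qed.

Lemma obj_eq (S : @spec R K d) (b : coef R d) u : (forall k, b k ord0 = 1) ->
  (fun y : 'rV[R]_K => ((\sum_(k < K) y ord0 k * index_k b (xu u) k)%:E + Dbar S y)%E)
  = (fun y => ((dotv y u)%:E + Dbar S y)%E).
Proof.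
move=> Hb; apply: funext => y; congr (_ + _)%E; congr EFin.
by apply: eq_bigr => k _; rewrite index_xu.
Qed.

Definition ystar (S : @spec R K d) u := Ybar_xb S (xu u) b1.

Lemma argmax_ystar (S : @spec R K d) : admissible S -> forall u,
  argmax_on (Bbar S) (fun y => ((dotv y u)%:E + Dbar S y)%E) = [set ystar S u].
Proof.
case=> _ [_ [_ [_ [H _]]]] u; rewrite -(obj_eq S b1 u) //; exact: H.
Qed.

Lemma ystar_max (S : @spec R K d) : admissible S -> forall u,
  Bbar S (ystar S u) /\ forall z, Bbar S z ->
  ((dotv z u)%:E + Dbar S z <= (dotv (ystar S u) u)%:E + Dbar S (ystar S u))%E.
Proof.
move=> HS u; have : argmax_on (Bbar S) (fun y => ((dotv y u)%:E + Dbar S y)%E) (ystar S u).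
  by rewrite argmax_ystar.
by [].
Qed.

Lemma Dbar_fin (S : @spec R K d) : admissible S -> forall u,
  Dbar S (ystar S u) \is a fin_num.
Proof.
move=> HS u; have [_ Hm] := ystar_max S HS u.
case: HS => _ [_ [_ [_ [_ [_ [_ [_ [Hnp [_ [_ [[y0 [By0 Hy0]] _]]]]]]]]]]].
rewrite fin_numE Hnp andbT; apply/negP => /eqP E.
have := Hm _ By0; rewrite E addeNy leeNy_eq.
by move: Hy0 => /fineK <-; rewrite -EFinD.
Qed.

Definition vv (S : @spec R K d) u := dotv (ystar S u) u + fine (Dbar S (ystar S u)).

Lemma Vfun_eq (S : @spec R K d) : admissible S -> forall u, Vfun S u = (vv S u)%:E.
Proof.
move=> HS u; have [By Hm] := ystar_max S HS u.
rewrite /vv EFinD fineK; last exact: (Dbar_fin S HS).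
apply/eqP; rewrite eq_le; apply/andP; split.
- by apply: ge_ereal_sup => _ [y Hy <-]; exact: Hm.
- by apply: ereal_sup_ubound; exists (ystar S u).
Qed.

Lemma sub_grad (S : @spec R K d) : admissible S -> forall u u',
  dotv (ystar S u) u' + fine (Dbar S (ystar S u)) <= vv S u'.
Proof.
move=> HS u u'; have [By Hm] := ystar_max S HS u.
rewrite -lee_fin -(Vfun_eq S HS) EFinD fineK; last exact: (Dbar_fin S HS).
by apply: ereal_sup_ubound; exists (ystar S u).
Qed.


Lemma ASF_xu (S : @spec R K d) : admissible S -> forall u, ASF S (xu u) = ystar S u.
Proof.
move=> HS u; have Hargu := argmax_ystar S HS u.
case: HS => _ [_ [_ [Hint [HA [_ [_ [_ [_ [_ [_ [_ Hae]]]]]]]]]]].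
apply/rowP => k; rewrite mxE.
rewrite (_ : (\int[sp_nu S]_t ((Ybar_xb S (xu u) (sp_beta S t)) ord0 k)%:E)%E
   = (\int[sp_nu S]_t (cst ((ystar S u) ord0 k)%:E t))%E).
  rewrite integral_cst //.
  set m := (X in fine (_ * X)%E).
  have -> : m = 1%E by exact: probability_setT.
  by rewrite mule1.
apply: ae_eq_integral => //.
- exact: (measurable_int _ (Hint (xu u) k)).
- apply: filterS Hae => t Ht _ /=; congr EFin.
  have := HA (xu u) (sp_beta S t); rewrite obj_eq // Hargu => E.
  have : [set ystar S u] (Ybar_xb S (xu u) (sp_beta S t)) by rewrite E.
  by move=> ->.
Qed.

Lemma oneD (phi1 phi2 gam : R -> R) :
  (forall s t, 0 <= s <= 1 -> 0 <= t <= 1 -> gam t * s - gam t * t <= phi1 s - phi1 t) ->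
  (forall s t, 0 <= s <= 1 -> 0 <= t <= 1 -> gam t * s - gam t * t <= phi2 s - phi2 t) ->
  phi1 1 - phi1 0 = phi2 1 - phi2 0.
Proof.
move=> H1 H2.
have key : forall n : nat, (0 < n)%N -> forall m : nat, (m <= n)%N ->
  `|(phi1 (m%:R / n%:R) - phi2 (m%:R / n%:R)) - (phi1 0 - phi2 0)|
    <= gam (m%:R / n%:R) / n%:R - gam 0 / n%:R.
  move=> n n0; have n0' : (0 < n%:R :> R) by rewrite ltr0n.
  have unit01 : forall m : nat, (m <= n)%N -> 0 <= (m%:R / n%:R : R) <= 1.
    move=> m mn; apply/andP; split; first by rewrite divr_ge0 // ltW.
    by rewrite ler_pdivrMr // mul1r ler_nat.
  elim=> [|m IH] mn.
    by rewrite mul0r subrr normr0 subrr.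
  have mn' : (m <= n)%N by apply: ltnW.
  have := IH mn'; set a := m%:R / n%:R; set b := m.+1%:R / n%:R.
  have hb : b = a + n%:R^-1 by rewrite /b /a -addn1 natrD mulrDl mul1r.
  have Ha := unit01 _ mn'; have Hb := unit01 _ mn.
  have h1 := H1 b a Hb Ha; have h1' := H1 a b Ha Hb.
  have h2 := H2 b a Hb Ha; have h2' := H2 a b Ha Hb.
  move: h1 h1' h2 h2'; rewrite hb !mulrDr.
  rewrite !ler_norml => h1 h1' h2 h2' /andP[i1 i2]; apply/andP; split; lra.
have M0 := key 1%N erefl 1%N erefl; rewrite divr1 divr1 in M0.
set x := `|_| in M0; set M := gam 1 - gam 0 .
suff : x = 0 by move/normr0_eq0 => h; lra.
have x0 : 0 <= x by apply: normr_ge0.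
have xM : x <= M by rewrite /M (le_trans M0) // divr1.
apply/eqP; rewrite eq_le x0 andbT; apply/negP => /negP; rewrite -ltNge => xp.
have Mx0 : 0 <= M / x by rewrite divr_ge0 // (le_trans x0 xM).
set n := (Num.Def.archi_bound (M / x)).+1.
have hn := archi_boundP Mx0.
have := key n erefl n (leqnn n).
rewrite divff ?pnatr_eq0 // -mulrBl -/M -/x.
have np : 0 < (n%:R : R) by rewrite ltr0n.
rewrite ler_pdivlMr // => h.
have : M / x < n%:R by rewrite /n -addn1 natrD; apply: (lt_le_trans hn); rewrite lerDl.
rewrite ltr_pdivrMr // => h2.
have : x * n%:R = n%:R * x by rewrite mulrC.
lra.
Qed.

Lemma dotv_seg (y u w : 'rV[R]_K) t : dotv y (u + t *: w) = dotv y u + t * dotv y w.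
Proof.
rewrite /dotv mulr_sumr -big_split; apply: eq_bigr => k _ /=.
by rewrite !mxE mulrDr mulrCA.
Qed.

Lemma grad_seg (S : @spec R K d) : admissible S -> forall u w s t,
  dotv (ystar S (u + t *: w)) w * s - dotv (ystar S (u + t *: w)) w * t
  <= vv S (u + s *: w) - vv S (u + t *: w).
Proof.
move=> HS u w s t; have := sub_grad S HS (u + t *: w) (u + s *: w).
set Y := ystar S (u + t *: w).
have -> : vv S (u + t *: w) = dotv Y (u + t *: w) + fine (Dbar S Y) by [].
rewrite !dotv_seg.
set a := dotv Y u; set g := dotv Y w; set F := fine _; set V := vv S _.
rewrite (mulrC s) (mulrC t); lra.
Qed.

Lemma box_seg (lo hi : 'I_K -> \bar R) u u' t : in_box lo hi u -> in_box lo hi u' ->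
  0 <= t <= 1 -> in_box lo hi (u + t *: (u' - u)).
Proof.
move=> Hu Hu' /andP[t0 t1] k; have /andP[l1 h1] := Hu k; have /andP[l2 h2] := Hu' k.
have cvx : forall a b : R, (a <= u ord0 k) -> (a <= u' ord0 k) ->
    a <= u ord0 k + t * (u' ord0 k - u ord0 k).
  move=> a b0 a1 a2; have e1 := ler_wpM2r t0 a2.
  have : 0 <= 1 - t by rewrite subr_ge0.
  move=> t1'; have e2 := ler_wpM2r t1' a1.
  move: e1 e2; rewrite !mulrBr !mulr1.
  set x1 := u ord0 k; set x2 := u' ord0 k.
  rewrite (mulrC t x1) (mulrC t x2); lra.
have cvx' : forall a b : R, (u ord0 k <= a) -> (u' ord0 k <= a) ->
    u ord0 k + t * (u' ord0 k - u ord0 k) <= a.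
  move=> a b0 a1 a2; have e1 := ler_wpM2r t0 a2.
  have : 0 <= 1 - t by rewrite subr_ge0.
  move=> t1'; have e2 := ler_wpM2r t1' a1.
  move: e1 e2; rewrite !mulrBr !mulr1.
  set x1 := u ord0 k; set x2 := u' ord0 k.
  rewrite (mulrC t x1) (mulrC t x2); lra.
rewrite !mxE; apply/andP; split.
- move: (lo k) l1 l2 => [r||] l1 l2; rewrite ?lee_fin in l1 l2.
  + by apply: cvx.
  + by move: l1; rewrite leye_eq.
  + by rewrite leNye.
- move: (hi k) h1 h2 => [r||] m1 m2; rewrite ?lee_fin in m1 m2.
  + by apply: cvx'.
  + by rewrite leey.
  + by move: m1; rewrite leeNy_eq.
Qed.
End Aux.
Arguments xu {R K} d u.
Arguments ystar {R K d} S u.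
Arguments vv {R K d} S u.
Arguments ASF_xu {R K d} S _ u.
Arguments Vfun_eq {R K d} S _ u.
Arguments grad_seg {R K d} S _ u w s t.
Arguments box_seg {R K} lo hi u u' t _ _ _.
Arguments oneD {R} phi1 phi2 gam _ _.

Lemma region_xu (R : realType) K (d : 'I_K -> nat) (lo hi : 'I_K -> \bar R) u :
  in_box lo hi u -> in_region lo hi (xu d u).
Proof.
move=> Hu k; split; first by rewrite /xu eqxx; exact: Hu.
by move=> j /negbTE Hj; rewrite /xu Hj.
Qed.

Lemma diff_eq (R : realType) K (d : 'I_K -> nat) (lo hi : 'I_K -> \bar R)
    (S1 S2 : @spec R K d) :
  admissible S1 -> admissible S2 ->
  (forall x, in_region lo hi x -> ASF S1 x = ASF S2 x) ->
  forall u u', in_box lo hi u -> in_box lo hi u' ->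
  vv S1 u' - vv S1 u = vv S2 u' - vv S2 u.
Proof.
move=> H1 H2 HA u u' Hu Hu'.
have yeq : forall v, in_box lo hi v -> ystar S2 v = ystar S1 v.
  by move=> v Hv; rewrite -(ASF_xu S1 H1) -(ASF_xu S2 H2) HA //; exact: region_xu.
set w := u' - u.
have := oneD (fun t => vv S1 (u + t *: w)) (fun t => vv S2 (u + t *: w))
  (fun t => dotv (ystar S1 (u + t *: w)) w).
rewrite /= scale1r scale0r addr0 /w (_ : u + (u' - u) = u'); last by rewrite addrC subrK.
apply.
- by move=> s t _ _; exact: grad_seg.
- move=> s t _ Ht; rewrite -yeq; first exact: grad_seg.
  exact: box_seg.
Qed.

Theorem proposition2 (R : realType) (K : nat) (d : 'I_K -> nat)
    (lo hi : 'I_K -> \bar R) (S1 S2 : @spec R K d) :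
  (forall k, (lo k <= hi k)%E) ->
  admissible S1 -> admissible S2 ->
  (forall x, in_region lo hi x -> ASF S1 x = ASF S2 x) ->
  (forall u u', in_box lo hi u -> in_box lo hi u' ->
     (Vfun S1 u - Vfun S1 u' = Vfun S2 u - Vfun S2 u')%E) /\
  ((forall k, lo k = -oo%E /\ hi k = +oo%E) ->
     exists c : R, forall u, Vfun S1 u = (Vfun S2 u + c%:E)%E).
Proof.
move=> _ H1 H2 HA; split.
  move=> u u' Hu Hu'; rewrite !(Vfun_eq _ H1) !(Vfun_eq _ H2) -!EFinB.
  by rewrite (diff_eq _ _ _ _ _ _ _ H1 H2 HA _ _ Hu' Hu).
move=> Hinf.
have Hb : forall v, in_box lo hi v.
  by move=> v k; have [-> ->] := Hinf k; rewrite leNye leey.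
exists (vv S1 0 - vv S2 0) => u.
rewrite (Vfun_eq _ H1) (Vfun_eq _ H2) -EFinD; congr EFin.
have := diff_eq _ _ _ _ _ _ _ H1 H2 HA _ _ (Hb 0) (Hb u); lra.
Qed.
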